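(* Let $n,r\ge1$, $\lambda\in\Lambda_\vartriangle(n,r)$ and $d\in\mathscr D^\vartriangle_\lambda$. Let $$Y=\{(s,t)\in\mathbb Z^2\mid 1\le d^{-1}(s)\le r,\ s<t,\ s,t\in R^\lambda_k\text{ for some }k\in\mathbb Z\},$$ $$Z=\{(s,t)\in\mathbb Z^2\mid 1\le s\le r,\ s<t,\ s,t\in R^\lambda_k\text{ for some }1\le k\le n\}.$$ Then $|Y|=|Z|=\ell(w_{0,\lambda})$, where $w_{0,\lambda}$ is the longest element of $\mathfrak S_\lambda$.
   Context: The affine symmetric group $\mathfrak S_{\vartriangle,r}$ is the group (under composition) of bijections $w:\mathbb Z\to\mathbb Z$ with $w(i+r)=w(i)+r$. It contains $s_i$ ($1\le i\le r$): $s_i(j)=j$ if $j\not\equiv i,i+1\pmod r$, $s_i(j)=j-1$ if $j\equiv i+1$, $s_i(j)=j+1$ if $j\equiv i$; and $\rho:j\mapsto j+1$. The $s_i$ generate a Coxeter group $W$ with length $\ell$; every element is uniquely $\rho^aw'$ ($w'\in W$) and $\ell(\rho^aw')=\ell(w')$. $\Lambda_\vartriangle(n,r)$ is the set of $\lambda=(\lambda_i)_{i\in\mathbb Z}$ with $\lambda_i\in\mathbb N$, $\lambda_{i+n}=\lambda_i$, $\lambda_1+\dots+\lambda_n=r$. For $1\le i\le n$, $k\in\mathbb Z$ put $\lambda_{k,i-1}=kr+\sum_{t=1}^{i-1}\lambda_t$ and $R^\lambda_{i+kn}=\{\lambda_{k,i-1}+1,\dots,\lambda_{k,i-1}+\lambda_i\}$.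 $\mathfrak S_\lambda$ is the Young subgroup $\mathfrak S_{(\lambda_1,\dots,\lambda_n)}$ of $\mathfrak S_r$ (periodically extended), and $\mathscr D^\vartriangle_\lambda=\{d\mid \ell(wd)=\ell(w)+\ell(d)\ \forall w\in\mathfrak S_\lambda\}$. *)

(* Defs.v *)
From Stdlib Require Import ZArith List Lia.
Import ListNotations.
Open Scope Z_scope.

Definition is_affine_perm (r : Z) (w : Z -> Z) : Prop :=
  (exists g : Z -> Z, (forall x, g (w x) = x) /\ (forall x, w (g x) = x)) /\
  (forall i, w (i + r) = w i + r).

Definition s_gen (r i : Z) (j : Z) : Z :=
  if Z.eqb (j mod r) (i mod r) then j + 1
  else if Z.eqb (j mod r) ((i + 1) mod r) then j - 1
  else j.

Definition word_eval (r : Z) (l : list Z) : Z -> Z :=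
  fold_right (fun i f => fun j => s_gen r i (f j)) (fun j => j) l.

(* w = rho^a o s_{i1} o ... o s_{ik} with k letters, 1 <= i_t <= r, rho : j |-> j+1 *)
Definition expressible (r : Z) (w : Z -> Z) (k : nat) : Prop :=
  exists (a : Z) (l : list Z),
    Forall (fun i => 1 <= i <= r) l /\ length l = k /\
    forall j, w j = word_eval r l j + a.

(* Coxeter length: ℓ(rho^a w') = ℓ(w'), the minimal word length. *)
Definition aff_length (r : Z) (w : Z -> Z) (k : nat) : Prop :=
  expressible r w k /\ forall k', expressible r w k' -> (k <= k')%nat.

Definition psum (lam : Z -> nat) (m : Z) : Z :=
  fold_right Z.add 0
    (map (fun t => Z.of_nat (lam (Z.of_nat t))) (seq 1 (Z.to_nat m))).

Definition in_Lambda (n r : Z) (lam : Z -> nat) : Prop :=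
  (forall i, lam (i + n) = lam i) /\ psum lam n = r.

(* λ_{k,i-1} = k r + sum_{t=1}^{i-1} λ_t *)
Definition lam_ki (r : Z) (lam : Z -> nat) (k i : Z) : Z :=
  k * r + psum lam (i - 1).

Definition in_R (n r : Z) (lam : Z -> nat) (m x : Z) : Prop :=
  exists k i, 1 <= i <= n /\ m = i + k * n /\
    lam_ki r lam k i < x <= lam_ki r lam k i + Z.of_nat (lam i).

(* Young subgroup S_λ of S_r (periodically extended) *)
Definition in_young (n r : Z) (lam : Z -> nat) (w : Z -> Z) : Prop :=
  is_affine_perm r w /\
  (forall j, 1 <= j <= r -> 1 <= w j <= r) /\
  (forall i x, 1 <= i <= n -> in_R n r lam i x -> in_R n r lam i (w x)).

Definition in_D (n r : Z) (lam : Z -> nat) (d : Z -> Z) : Prop :=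
  is_affine_perm r d /\
  forall w, in_young n r lam w ->
    forall a b, aff_length r w a -> aff_length r d b ->
      aff_length r (fun j => w (d j)) (a + b).

Definition is_longest (n r : Z) (lam : Z -> nat) (w0 : Z -> Z) : Prop :=
  in_young n r lam w0 /\
  forall w a b, in_young n r lam w -> aff_length r w a -> aff_length r w0 b ->
    (a <= b)%nat.

Definition has_card (P : Z * Z -> Prop) (m : nat) : Prop :=
  exists l : list (Z * Z), NoDup l /\ length l = m /\ forall x, In x l <-> P x.

(* Y (1 <= d^{-1}(s) <= r written as: s = d j for some 1 <= j <= r) *)
Definition Yset (n r : Z) (lam : Z -> nat) (d : Z -> Z) (p : Z * Z) : Prop :=
  let (s, t) := p in
  (exists j, 1 <= j <= r /\ d j = s) /\ s < t /\
  exists m, in_R n r lam m s /\ in_R n r lam m t.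

Definition Zset (n r : Z) (lam : Z -> nat) (p : Z * Z) : Prop :=
  let (s, t) := p in
  1 <= s <= r /\ s < t /\
  exists m, 1 <= m <= n /\ in_R n r lam m s /\ in_R n r lam m t.

(* Main.v *)
Require Import Defs.
From Stdlib Require Import ZArith List Lia.
Import ListNotations.
Open Scope Z_scope.

Fixpoint zr (k : nat) (a : Z) : list Z :=
  match k with O => [] | S k' => a :: zr k' (a+1) end.

Lemma zr_In k a x : In x (zr k a) <-> a <= x < a + Z.of_nat k.
Proof. revert a; induction k; intros a; simpl. lia. rewrite IHk. lia. Qed.

Lemma zr_NoDup k a : NoDup (zr k a).
Proof. revert a; induction k; intros a; simpl; constructor; auto.
  rewrite zr_In; lia. Qed.

Fixpoint plist (r : Z) (k : nat) (a : Z) : list (Z*Z) :=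
  match k with O => []
  | S k' => map (fun b => (a,b)) (zr (Z.to_nat (r - a)) (a+1)) ++ plist r k' (a+1) end.

Lemma plist_In r k a x y : In (x,y) (plist r k a) <-> a <= x < a + Z.of_nat k /\ x < y <= r.
Proof. revert a; induction k; intros a; simpl. lia.
  rewrite in_app_iff, IHk, in_map_iff. split.
  - intros [[b [Hb Hin]]|H]. inversion Hb; subst. rewrite zr_In in Hin. lia. lia.
  - intros H. destruct (Z.eq_dec x a). left. exists y. split. subst; auto.
    rewrite zr_In. lia. right. lia.
Qed.

Lemma plist_NoDup r k a : NoDup (plist r k a).
Proof. revert a; induction k; intros a; simpl. constructor.
  apply NoDup_app; auto.
  - apply NoDup_map_NoDup_ForallPairs. intros u v _ _ H. inversion H; auto.
    apply zr_NoDup.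
  - intros [x y] H1 H2. apply in_map_iff in H1. destruct H1 as [b [Hb _]]. inversion Hb; subst.
    apply plist_In in H2. lia.
Qed.

Definition pairs r := plist r (Z.to_nat r) 1.

Lemma pairs_In r x y : 0 <= r -> (In (x,y) (pairs r) <-> 1 <= x /\ x < y <= r).
Proof. intros. unfold pairs. rewrite plist_In. lia. Qed.

Lemma pairs_NoDup r : NoDup (pairs r).
Proof. apply plist_NoDup. Qed.

Definition sumZ (l : list Z) := fold_right Z.add 0 l.

Lemma sum_ext {A} (P : list A) (F G : A -> Z) :
  (forall x, In x P -> F x = G x) -> sumZ (map F P) = sumZ (map G P).
Proof. intros H. f_equal. apply map_ext_in. auto. Qed.

Lemma sum_le {A} (P : list A) (F G : A -> Z) :
  (forall x, In x P -> F x <= G x) -> sumZ (map F P) <= sumZ (map G P).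
Proof. induction P; simpl; intros H. lia.
  specialize (IHP (fun x h => H x (or_intror h))). specialize (H a (or_introl eq_refl)). lia. Qed.

Lemma sum_le_one {A} (P : list A) (F G : A -> Z) (sp : A -> bool) :
  NoDup P -> (forall x, In x P -> sp x = false -> G x = F x) ->
  (forall x, In x P -> sp x = true -> G x <= F x + 1) ->
  (forall x y, In x P -> In y P -> sp x = true -> sp y = true -> x = y) ->
  sumZ (map G P) <= sumZ (map F P) + 1.
Proof. induction P as [|a P IH]; simpl; intros ND H1 H2 H3. lia.
  inversion ND; subst.
  destruct (sp a) eqn:E.
  - assert (sumZ (map G P) = sumZ (map F P)).
    { apply sum_ext. intros x Hx. apply H1. right; auto.
      destruct (sp x) eqn:E2; auto. exfalso. assert (x = a) by (apply H3; auto).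
      subst; contradiction. }
    specialize (H2 a (or_introl eq_refl) E). lia.
  - rewrite (H1 a (or_introl eq_refl) E).
    assert (sumZ (map G P) <= sumZ (map F P) + 1).
    { apply IH; auto. } lia.
Qed.

Lemma sum_exact {A} (dec : forall x y : A, {x = y} + {x <> y}) (P : list A) (F G : A -> Z) x0 :
  NoDup P -> In x0 P -> (forall x, In x P -> x <> x0 -> G x = F x) ->
  sumZ (map G P) = sumZ (map F P) + G x0 - F x0.
Proof. induction P as [|a P IH]; simpl; intros ND Hin H. contradiction.
  inversion ND; subst. destruct (dec a x0) as [e|ne].
  - subst. assert (sumZ (map G P) = sumZ (map F P)).
    { apply sum_ext. intros x Hx. apply H. right; auto. intro; subst; contradiction. }
    lia.
  - destruct Hin as [Hin|Hin]. congruence.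
    rewrite (H a (or_introl eq_refl) ne). rewrite IH; auto. lia.
Qed.

Lemma sum_ind01 {A} (P : list A) (h : A -> bool) :
  sumZ (map (fun p => if h p then 1 else 0) P) = Z.of_nat (length (filter h P)).
Proof. induction P. reflexivity. cbn [map filter sumZ fold_right]. destruct (h a); cbn [length]; fold (sumZ (map (fun p => if h p then 1 else 0) P)); rewrite IHP; lia. Qed.

Lemma sum01_pos {A} (P : list A) (h : A -> bool) :
  0 < sumZ (map (fun p => if h p then 1 else 0) P) -> exists x, In x P /\ h x = true.
Proof. induction P; simpl. lia. destruct (h a) eqn:E; intros. exists a; auto.
  destruct IHP as [x [? ?]]. lia. exists x; auto. Qed.

Lemma sum_nonneg {A} (P : list A) (F : A -> Z) :
  (forall x, In x P -> 0 <= F x) -> 0 <= sumZ (map F P).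
Proof. induction P; simpl; intros H. lia.
  specialize (IHP (fun x h => H x (or_intror h))). specialize (H a (or_introl eq_refl)). lia. Qed.

Lemma small_div r t : 0 < r -> -2*r <= t < 2*r ->
  t / r = if t <? -r then -2 else if t <? 0 then -1 else if t <? r then 0 else 1.
Proof. intros Hr Ht.
  destruct (t <? -r) eqn:E1; [|destruct (t <? 0) eqn:E2; [|destruct (t <? r) eqn:E3]];
  rewrite ?Z.ltb_lt, ?Z.ltb_ge in *; symmetry.
  - apply Z.div_unique with (r := t + 2 * r); lia.
  - apply Z.div_unique with (r := t + r); lia.
  - apply Z.div_unique with (r := t); lia.
  - apply Z.div_unique with (r := t - r); lia.
Qed.
Definition kp (r k : Z) := if k mod r + 1 <? r then k mod r + 1 else 0.

Lemma modS r k : 0 < r -> (k+1) mod r = kp r k.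
Proof. intros Hr. unfold kp.
  rewrite (Z.div_mod k r) at 1 by lia.
  replace (r * (k / r) + k mod r + 1) with ((k mod r + 1) + (k/r) * r) by ring.
  rewrite Z.mod_add by lia. pose proof (Z.mod_pos_bound k r Hr).
  destruct (k mod r + 1 <? r) eqn:E; rewrite ?Z.ltb_lt, ?Z.ltb_ge in E.
  apply Z.mod_small; lia. replace (k mod r + 1) with r by lia. apply Z.mod_same. lia.
Qed.

Lemma kp_bound r k : 2 <= r -> 0 <= kp r k < r /\ kp r k <> k mod r.
Proof. intros Hr. unfold kp. pose proof (Z.mod_pos_bound k r ltac:(lia)).
  destruct (k mod r + 1 <? r) eqn:E; rewrite ?Z.ltb_lt, ?Z.ltb_ge in E; lia. Qed.

Definition dl (r k rho : Z) := if rho =? k mod r then 1 else if rho =? kp r k then -1 else 0.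

Lemma s_gen_eq r k x : 0 < r -> s_gen r k x = x + dl r k (x mod r).
Proof. intros Hr. unfold s_gen, dl. rewrite modS by lia.
  destruct (x mod r =? k mod r); [lia|]. destruct (x mod r =? kp r k); lia. Qed.

Definition spb r k x y :=
  orb (andb (x mod r =? k mod r) (y mod r =? kp r k)) (andb (x mod r =? kp r k) (y mod r =? k mod r)).

Lemma pair_main r k x y : 2 <= r ->
  (spb r k x y = false -> Z.abs ((s_gen r k y - s_gen r k x) / r) = Z.abs ((y - x) / r)) /\
  Z.abs ((s_gen r k y - s_gen r k x) / r) <= Z.abs ((y - x) / r) + 1.
Proof. intros Hr. rewrite !s_gen_eq by lia. unfold spb.
  pose proof (kp_bound r k Hr) as [Hk1 Hk2].
  pose proof (Z.mod_pos_bound k r ltac:(lia)).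
  pose proof (Z.mod_pos_bound x r ltac:(lia)).
  pose proof (Z.mod_pos_bound y r ltac:(lia)).
  pose proof (Z.div_mod x r ltac:(lia)). pose proof (Z.div_mod y r ltac:(lia)).
  set (rx := x mod r) in *. set (ry := y mod r) in *. set (qx := x / r) in *. set (qy := y / r) in *.
  assert (Hcc : kp r k = k mod r + 1 \/ (kp r k = 0 /\ k mod r = r - 1)).
  { unfold kp. destruct (k mod r + 1 <? r) eqn:E; rewrite ?Z.ltb_lt, ?Z.ltb_ge in E; lia. }
  set (c := k mod r) in *. set (c' := kp r k) in *.
  replace (y + dl r k ry - (x + dl r k rx)) with ((qy - qx) * r + (ry + dl r k ry - rx - dl r k rx)) by lia.
  replace (y - x) with ((qy - qx) * r + (ry - rx)) by lia.
  rewrite !Z.div_add_l by lia.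
  unfold dl; fold c c'.
  destruct (rx =? c) eqn:E1; destruct (ry =? c) eqn:E2; try destruct (rx =? c') eqn:E3;
  try destruct (ry =? c') eqn:E4; rewrite ?Z.eqb_eq, ?Z.eqb_neq in *; simpl;
  rewrite !small_div by lia;
  repeat match goal with |- context [?a <? ?b] => destruct (a <? b) eqn:?; rewrite ?Z.ltb_lt, ?Z.ltb_ge in * end;
  split; intros; try discriminate; lia.
Qed.
Definition term (r : Z) (f : Z -> Z) (p : Z*Z) := Z.abs ((f (snd p) - f (fst p)) / r).
Definition Phi r f := sumZ (map (term r f) (pairs r)).
Definition RI r (f : Z -> Z) := forall a b, 1 <= a <= r -> 1 <= b <= r -> f a mod r = f b mod r -> a = b.

Lemma mod_char r q t : 0 < r -> -1 <= t <= r ->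
  (q * r + t) mod r = if t =? -1 then r - 1 else if t =? r then 0 else t.
Proof. intros Hr Ht. rewrite Z.add_comm, Z.mod_add by lia.
  destruct (t =? -1) eqn:E1; [|destruct (t =? r) eqn:E2]; rewrite ?Z.eqb_eq, ?Z.eqb_neq in *.
  - symmetry. apply Z.mod_unique with (q := -1); lia.
  - subst. apply Z.mod_same; lia.
  - apply Z.mod_small; lia.
Qed.

Lemma s_gen_mod_inj r k x y : 2 <= r ->
  s_gen r k x mod r = s_gen r k y mod r -> x mod r = y mod r.
Proof. intros Hr. rewrite !s_gen_eq by lia.
  pose proof (kp_bound r k Hr) as [Hk1 Hk2].
  pose proof (Z.mod_pos_bound k r ltac:(lia)).
  assert (Hcc : kp r k = k mod r + 1 \/ (kp r k = 0 /\ k mod r = r - 1)).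
  { unfold kp. destruct (k mod r + 1 <? r) eqn:E; rewrite ?Z.ltb_lt, ?Z.ltb_ge in E; lia. }
  pose proof (Z.mod_pos_bound x r ltac:(lia)).
  pose proof (Z.mod_pos_bound y r ltac:(lia)).
  rewrite (Z.div_mod x r) at 1 by lia. rewrite (Z.div_mod y r) at 1 by lia.
  replace (r * (x / r) + x mod r + dl r k (x mod r)) with ((x/r) * r + (x mod r + dl r k (x mod r))) by ring.
  replace (r * (y / r) + y mod r + dl r k (y mod r)) with ((y/r) * r + (y mod r + dl r k (y mod r))) by ring.
  unfold dl.
  set (c := k mod r) in *. set (c' := kp r k) in *. set (rx := x mod r) in *. set (ry := y mod r) in *.
  destruct (rx =? c) eqn:E1; destruct (ry =? c) eqn:E2; try destruct (rx =? c') eqn:E3;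
  try destruct (ry =? c') eqn:E4; rewrite ?Z.eqb_eq, ?Z.eqb_neq in *;
  rewrite !mod_char by lia;
  repeat match goal with |- context [?a =? ?b] => destruct (a =? b) eqn:?; rewrite ?Z.eqb_eq, ?Z.eqb_neq in * end;
  lia.
Qed.

Lemma sum_zero {A} (P : list A) : sumZ (map (fun _ => 0) P) = 0.
Proof. induction P; simpl; auto. Qed.

Lemma pairs1 : pairs 1 = [].
Proof. reflexivity. Qed.

Lemma Phi_nonneg r f : 0 <= Phi r f.
Proof. apply sum_nonneg. intros; unfold term; lia. Qed.

Lemma Phi_word r l : 1 <= r -> RI r (word_eval r l) /\ Phi r (word_eval r l) <= Z.of_nat (length l).
Proof. intros Hr. induction l as [|i l IH].
  - split.
    + intros a b Ha Hb. simpl.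
      rewrite <- (Z.add_0_l a), <- (Z.add_0_l b). rewrite <- (Z.mul_0_l r).
      rewrite !mod_char by lia.
      repeat match goal with |- context [?a =? ?b] => destruct (a =? b) eqn:?; rewrite ?Z.eqb_eq, ?Z.eqb_neq in * end; lia.
    + simpl. unfold Phi. rewrite <- (sum_zero (pairs r)). apply Z.eq_le_incl, sum_ext.
      intros [a b] Hin. apply pairs_In in Hin; [|lia]. unfold term; simpl.
      rewrite Z.div_small by lia. auto.
  - destruct IH as [IH1 IH2]. set (f := word_eval r l) in *.
    assert (E : word_eval r (i :: l) = fun j => s_gen r i (f j)) by reflexivity.
    rewrite E. clear E.
    destruct (Z.eq_dec r 1) as [->|Hr2].
    + split. intros a b Ha Hb _. lia. unfold Phi. rewrite pairs1. simpl. lia.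
    + assert (Hr' : 2 <= r) by lia. split.
      * intros a b Ha Hb H. apply IH1; auto. eapply s_gen_mod_inj; eauto.
      * unfold Phi. cbn [length]. rewrite Nat2Z.inj_succ.
        assert (sumZ (map (term r (fun j => s_gen r i (f j))) (pairs r)) <= sumZ (map (term r f) (pairs r)) + 1).
        { apply sum_le_one with (sp := fun p => spb r i (f (fst p)) (f (snd p))).
          - apply pairs_NoDup.
          - intros [a b] _ Hsp. unfold term; simpl in *. apply pair_main; auto.
          - intros [a b] _ _. unfold term; simpl. apply pair_main; auto.
          - intros [a b] [a' b'] Ha Hb'. apply pairs_In in Ha; [|lia]. apply pairs_In in Hb'; [|lia].
            simpl. unfold spb. intros H1 H2.
            repeat rewrite Bool.orb_true_iff, ?Bool.andb_true_iff, ?Z.eqb_eq in H1, H2.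
            assert (forall u v, 1 <= u <= r -> 1 <= v <= r -> f u mod r = f v mod r -> u = v) by exact IH1.
            destruct H1 as [[H1 H1']|[H1 H1']]; destruct H2 as [[H2 H2']|[H2 H2']].
            + f_equal; apply IH1; lia.
            + exfalso. assert (a = b') by (apply IH1; lia). assert (b = a') by (apply IH1; lia). lia.
            + exfalso. assert (a = b') by (apply IH1; lia). assert (b = a') by (apply IH1; lia). lia.
            + f_equal; apply IH1; lia. }
        fold (Phi r f) in *. unfold Phi in *. lia.
Qed.

Lemma Phi_expr r w k : 1 <= r -> expressible r w k -> Phi r w <= Z.of_nat k.
Proof. intros Hr [a [l [_ [Hl Hw]]]]. subst k.
  replace (Phi r w) with (Phi r (word_eval r l)). apply Phi_word; auto.
  unfold Phi. apply sum_ext. intros [x y] _. unfold term; simpl. rewrite !Hw. f_equal. f_equal. lia.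
Qed.
Lemma fold_acc (l : list Z) a : fold_right Z.add a l = fold_right Z.add 0 l + a.
Proof. induction l; simpl; lia. Qed.

Lemma psum_succ lam i : 0 <= i -> psum lam (i+1) = psum lam i + Z.of_nat (lam (i+1)).
Proof. intros Hi. unfold psum. rewrite Z2Nat.inj_add by lia. rewrite Nat.add_1_r.
  rewrite seq_S, map_app, fold_right_app. cbn [map fold_right]. rewrite fold_acc.
  replace (Z.of_nat (1 + Z.to_nat i)) with (i+1) by lia. lia. Qed.

Lemma psum_mono lam i j : 0 <= i <= j -> psum lam i <= psum lam j.
Proof. intros H. replace j with (i + Z.of_nat (Z.to_nat (j - i))) by lia.
  generalize (Z.to_nat (j - i)). intros k. induction k. simpl. rewrite Z.add_0_r; lia.
  replace (i + Z.of_nat (S k)) with ((i + Z.of_nat k) + 1) by lia. rewrite psum_succ by lia. lia. Qed.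

Definition blk lam i x := psum lam (i-1) < x <= psum lam i.

Lemma decomp_uniq n i i' k k' : 1 <= i <= n -> 1 <= i' <= n -> i + k * n = i' + k' * n -> i = i' /\ k = k'.
Proof. intros. assert (k = k'). { destruct (Z.lt_total k k') as [H2|[H2|H2]]; auto; nia. } subst; lia. Qed.

Lemma inR_iff n r lam m x : in_R n r lam m x <->
  exists k i, 1 <= i <= n /\ m = i + k * n /\ blk lam i (x - k * r).
Proof. unfold in_R, lam_ki, blk. split; intros [k [i [H1 [H2 H3]]]]; exists k, i; split; auto; split; auto;
  pose proof (psum_succ lam (i-1) ltac:(lia)); replace (i - 1 + 1) with i in * by lia; lia. Qed.

Lemma inR_small n r lam m x : 1 <= m <= n -> (in_R n r lam m x <-> blk lam m x).
Proof. intros Hm. rewrite inR_iff. split.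
  - intros [k [i [H1 [H2 H3]]]]. assert (i = m /\ k = 0) as [-> ->].
    { apply (decomp_uniq n); lia. } replace (x - 0 * r) with x in H3 by lia. auto.
  - intros H. exists 0, m. split; auto. split. lia. replace (x - 0 * r) with x by lia. auto.
Qed.

Lemma blk_range n r lam i x : psum lam n = r -> 1 <= i <= n -> blk lam i x -> 1 <= x <= r.
Proof. unfold blk; intros Hn Hi Hx. pose proof (psum_mono lam 0 (i-1) ltac:(lia)).
  pose proof (psum_mono lam i n ltac:(lia)). change (psum lam 0) with 0 in *. lia. Qed.

Lemma blk_order lam i j x y : 1 <= i -> i < j -> blk lam i x -> blk lam j y -> x < y.
Proof. unfold blk; intros Hi Hij Hx Hy. pose proof (psum_mono lam i (j-1) ltac:(lia)). lia. Qed.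

Lemma blk_disj lam i j x : 1 <= i -> 1 <= j -> blk lam i x -> blk lam j x -> i = j.
Proof. intros. destruct (Z.lt_total i j) as [H3|[H3|H3]]; auto.
  pose proof (blk_order lam i j x x ltac:(lia) H3 H1 H2); lia. pose proof (blk_order lam j i x x ltac:(lia) H3 H2 H1); lia. Qed.

Lemma blk_exists n r lam x : 0 <= n -> psum lam n = r -> 1 <= x <= r -> exists i, 1 <= i <= n /\ blk lam i x.
Proof. intros Hn Hr Hx.
  assert (forall j : nat, x <= psum lam (Z.of_nat j) -> exists i, 1 <= i <= Z.of_nat j /\ blk lam i x).
  { induction j; intros H. simpl in H. change (psum lam 0) with 0 in H. lia.
    destruct (Z_le_gt_dec x (psum lam (Z.of_nat j))).
    - destruct (IHj l) as [i [? ?]]. exists i. split; auto. lia.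
    - exists (Z.of_nat (S j)). split. lia. unfold blk. replace (Z.of_nat (S j) - 1) with (Z.of_nat j) by lia. lia. }
  destruct (H (Z.to_nat n)) as [i [? ?]]. rewrite Z2Nat.id by lia. lia. exists i. split; auto. lia.
Qed.

Definition blkb lam i x := andb (psum lam (i-1) <? x) (x <=? psum lam i).
Lemma blkb_iff lam i x : blkb lam i x = true <-> blk lam i x.
Proof. unfold blkb, blk. rewrite Bool.andb_true_iff, Z.ltb_lt, Z.leb_le. tauto. Qed.

Definition sbb n lam (p : Z*Z) := existsb (fun m => andb (blkb lam m (fst p)) (blkb lam m (snd p))) (zr (Z.to_nat n) 1).
Lemma sbb_iff n lam x y : 0 <= n -> (sbb n lam (x,y) = true <-> exists m, 1 <= m <= n /\ blk lam m x /\ blk lam m y).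
Proof. intros Hn. unfold sbb. rewrite existsb_exists. split.
  - intros [m [H1 H2]]. apply zr_In in H1. apply Bool.andb_true_iff in H2. rewrite !blkb_iff in H2.
    exists m. simpl in H2. split. lia. tauto.
  - intros [m [H1 H2]]. exists m. rewrite zr_In. split. lia. apply Bool.andb_true_iff. rewrite !blkb_iff. tauto.
Qed.
Ltac dall := repeat match goal with
  | |- context [?a =? ?b] => destruct (Z.eqb_spec a b)
  | H : context [?a =? ?b] |- _ => destruct (Z.eqb_spec a b)
  | |- context [?a <? ?b] => destruct (Z.ltb_spec a b)
  | H : context [?a <? ?b] |- _ => destruct (Z.ltb_spec a b)
  end.
Definition Young n r lam (w g : Z -> Z) :=
  (forall x, g (w x) = x) /\ (forall x, w (g x) = x) /\ (forall i, w (i + r) = w i + r) /\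
  (forall j, 1 <= j <= r -> 1 <= w j <= r) /\
  (forall i x, 1 <= i <= n -> blk lam i x -> blk lam i (w x)).

Lemma per_gen r (f : Z -> Z) : (forall i, f (i + r) = f i + r) -> forall q i, f (i + q * r) = f i + q * r.
Proof. intros H.
  assert (Hn : forall k : nat, forall i, f (i + Z.of_nat k * r) = f i + Z.of_nat k * r).
  { induction k; intros i. simpl. rewrite !Z.add_0_r. auto.
    replace (i + Z.of_nat (S k) * r) with ((i + Z.of_nat k * r) + r) by lia. rewrite H, IHk. lia. }
  intros q i. destruct (Z_le_gt_dec 0 q).
  - rewrite <- (Z2Nat.id q) by lia. apply Hn.
  - specialize (Hn (Z.to_nat (-q)) (i + q * r)). rewrite Z2Nat.id in Hn by lia.
    replace (i + q * r + - q * r) with i in Hn by lia. lia.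
Qed.

Lemma decomp r j : 0 < r -> j = ((j - 1) mod r + 1) + ((j - 1) / r) * r /\ 1 <= (j - 1) mod r + 1 <= r.
Proof. intros Hr. pose proof (Z.div_mod (j-1) r ltac:(lia)). pose proof (Z.mod_pos_bound (j-1) r Hr). lia. Qed.

Lemma young_g n r lam w g : 1 <= r -> Young n r lam w g ->
  (forall i, g (i + r) = g i + r) /\ (forall v, 1 <= v <= r -> 1 <= g v <= r).
Proof. intros Hr (H1 & H2 & H3 & H4 & H5). split.
  - intros i. rewrite <- (H2 i) at 1. rewrite <- H3, H1. auto.
  - intros v Hv. destruct (decomp r (g v) ltac:(lia)) as [E B].
    set (y := (g v - 1) mod r + 1) in *. set (q := (g v - 1) / r) in *.
    assert (v = w y + q * r). { rewrite <- (H2 v) at 1. rewrite E. apply per_gen; auto. }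
    specialize (H4 y B). assert (q = 0) by nia. lia.
Qed.

Lemma small_mod r x : 1 <= x <= r -> x mod r = if x =? r then 0 else x.
Proof. intros. destruct (x =? r) eqn:E; rewrite ?Z.eqb_eq, ?Z.eqb_neq in E.
  subst; apply Z.mod_same; lia. apply Z.mod_small; lia. Qed.

Lemma s_gen_small r v x : 2 <= r -> 1 <= v <= r - 1 -> 1 <= x <= r ->
  s_gen r v x = if x =? v then v + 1 else if x =? v + 1 then v else x.
Proof. intros Hr Hv Hx. unfold s_gen.
  rewrite (small_mod r x), (small_mod r v), (small_mod r (v+1)) by lia.
  dall; lia.
Qed.

Lemma s_gen_per r k x : 0 < r -> s_gen r k (x + r) = s_gen r k x + r.
Proof. intros Hr. unfold s_gen. replace (x + r) with (x + 1 * r) by ring. rewrite Z.mod_add by lia.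
  destruct (x mod r =? k mod r); [lia|]. destruct (x mod r =? (k+1) mod r); lia. Qed.

Lemma s_gen_modv r k x : 2 <= r -> s_gen r k x mod r =
  if x mod r =? k mod r then kp r k else if x mod r =? kp r k then k mod r else x mod r.
Proof. intros Hr. rewrite (s_gen_eq r k x) by lia.
  pose proof (Z.mod_pos_bound k r ltac:(lia)).
  pose proof (kp_bound r k Hr) as [Hk1 Hk2].
  assert (Hcc : kp r k = k mod r + 1 \/ (kp r k = 0 /\ k mod r = r - 1)).
  { unfold kp. destruct (k mod r + 1 <? r) eqn:E; rewrite ?Z.ltb_lt, ?Z.ltb_ge in E; lia. }
  pose proof (Z.mod_pos_bound x r ltac:(lia)).
  rewrite (Z.div_mod x r) at 1 by lia.
  replace (r * (x / r) + x mod r + dl r k (x mod r)) with ((x/r) * r + (x mod r + dl r k (x mod r))) by ring.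
  unfold dl.
  set (c := k mod r) in *. set (c' := kp r k) in *. set (rx := x mod r) in *.
  dall; rewrite mod_char by lia; dall; lia.
Qed.

Lemma s_gen_inv r k x : 2 <= r -> s_gen r k (s_gen r k x) = x.
Proof. intros Hr. rewrite (s_gen_eq r k (s_gen r k x)) by lia. rewrite s_gen_modv by lia.
  rewrite (s_gen_eq r k x) by lia.
  pose proof (kp_bound r k Hr) as [Hk1 Hk2].
  unfold dl. dall; lia.
Qed.

Definition invb (w : Z -> Z) (p : Z*Z) := w (snd p) <? w (fst p).

Lemma Phi_young n r lam w g : 1 <= r -> Young n r lam w g ->
  Phi r w = sumZ (map (fun p => if invb w p then 1 else 0) (pairs r)).
Proof. intros Hr Y. unfold Phi. apply sum_ext. intros [a b] Hin. apply pairs_In in Hin; [|lia].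
  destruct Y as (_ & _ & _ & H4 & _). pose proof (H4 a ltac:(lia)). pose proof (H4 b ltac:(lia)).
  unfold term, invb; simpl. rewrite small_div by lia.
  dall; lia.
Qed.

Lemma pair_dec (x y : Z*Z) : {x = y} + {x <> y}.
Proof. decide equality; apply Z.eq_dec. Qed.

Lemma young_step n r lam w g v i : 1 <= n -> psum lam n = r -> Young n r lam w g ->
  1 <= v <= r - 1 -> 1 <= i <= n -> blk lam i v -> blk lam i (v+1) ->
  Young n r lam (fun x => s_gen r v (w x)) (fun x => g (s_gen r v x)) /\
  Phi r (fun x => s_gen r v (w x)) = Phi r w + (if g v <? g (v+1) then 1 else -1).
Proof. intros Hn Hr Y Hv Hi Bv Bv1.
  assert (Hr2 : 2 <= r) by lia.
  pose proof (young_g n r lam w g ltac:(lia) Y) as [G1 G2].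
  destruct Y as (H1 & H2 & H3 & H4 & H5).
  assert (Y' : Young n r lam (fun x => s_gen r v (w x)) (fun x => g (s_gen r v x))).
  { split; [|split; [|split; [|split]]].
    - intros x. rewrite s_gen_inv; auto.
    - intros x. rewrite H2. apply s_gen_inv; auto.
    - intros x. rewrite H3. apply s_gen_per. lia.
    - intros j Hj. specialize (H4 j Hj). rewrite s_gen_small by lia.
      destruct (w j =? v); [lia|]. destruct (w j =? v + 1); lia.
    - intros i' x Hi' Bx. specialize (H5 i' x Hi' Bx).
      pose proof (blk_range n r lam i' (w x) Hr Hi' H5).
      rewrite s_gen_small by lia.
      destruct (w x =? v) eqn:E1; rewrite ?Z.eqb_eq, ?Z.eqb_neq in E1.
      + rewrite E1 in H5. assert (i' = i) by (apply (blk_disj lam i' i v); lia || auto). subst; auto.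
      + destruct (w x =? v + 1) eqn:E2; rewrite ?Z.eqb_eq, ?Z.eqb_neq in E2; auto.
        rewrite E2 in H5. assert (i' = i) by (apply (blk_disj lam i' i (v+1)); lia || auto). subst; auto. }
  split; auto.
  rewrite (Phi_young n r lam _ _ ltac:(lia) Y'), (Phi_young n r lam w g ltac:(lia) (conj H1 (conj H2 (conj H3 (conj H4 H5))))).
  set (p := g v). set (q := g (v+1)).
  assert (Hp : 1 <= p <= r) by (apply G2; lia). assert (Hq : 1 <= q <= r) by (apply G2; lia).
  assert (wp : w p = v) by apply H2. assert (wq : w q = v + 1) by apply H2.
  assert (pq : p <> q) by (intro E; rewrite E in wp; lia).
  rewrite (sum_exact pair_dec (pairs r) (fun p => if invb w p then 1 else 0) (fun p => if invb (fun x => s_gen r v (w x)) p then 1 else 0) (Z.min p q, Z.max p q)).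
  - unfold invb; simpl.
    destruct (Z_lt_le_dec p q).
    + rewrite Z.min_l, Z.max_r by lia. rewrite wp, wq, !s_gen_small by lia.
      dall;
      dall; lia.
    + rewrite Z.min_r, Z.max_l by lia. rewrite wp, wq, !s_gen_small by lia.
      dall;
      dall; lia.
  - apply pairs_NoDup.
  - apply pairs_In; lia.
  - intros [a b] Hin Hne. apply pairs_In in Hin; [|lia]. unfold invb; simpl.
    pose proof (H4 a ltac:(lia)). pose proof (H4 b ltac:(lia)).
    assert (w a <> w b) by (intro E; apply (f_equal g) in E; rewrite !H1 in E; lia).
    rewrite !s_gen_small by lia.
    destruct (Z.eq_dec (w a) v) as [Ea|Ea]; [destruct (Z.eq_dec (w b) (v+1)) as [Eb|Eb]|].
    + exfalso. apply Hne. assert (Ha : a = p) by (rewrite <- (H1 a), Ea; auto).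
      assert (Hb : b = q) by (rewrite <- (H1 b), Eb; auto). rewrite Ha, Hb in *. f_equal; lia.
    + dall;
      dall; lia.
    + destruct (Z.eq_dec (w a) (v+1)) as [Ea'|Ea']; [destruct (Z.eq_dec (w b) v) as [Eb|Eb]|].
      * exfalso. apply Hne. assert (Ha : a = q) by (rewrite <- (H1 a), Ea'; auto).
        assert (Hb : b = p) by (rewrite <- (H1 b), Eb; auto). rewrite Ha, Hb in *. f_equal; lia.
      * dall;
        dall; lia.
      * dall;
        dall; lia.
Qed.
Definition Nlist n r lam := filter (sbb n lam) (pairs r).

Lemma disc_gt (h : Z -> Z) : forall (k : nat) c, h (c + Z.of_nat k) < h c ->
  exists v, c <= v < c + Z.of_nat k /\ h (v + 1) < h v.
Proof. induction k; intros c H. rewrite Z.add_0_r in H; lia.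
  destruct (Z_lt_le_dec (h (c+1)) (h c)). exists c; split; auto; lia.
  destruct (IHk (c+1)) as [v [? ?]]. replace (c + 1 + Z.of_nat k) with (c + Z.of_nat (S k)) by lia. lia.
  exists v; split; auto; lia. Qed.

Lemma disc_lt (h : Z -> Z) : forall (k : nat) c, h c < h (c + Z.of_nat k) ->
  exists v, c <= v < c + Z.of_nat k /\ h v < h (v + 1).
Proof. intros k c H. destruct (disc_gt (fun x => - h x) k c) as [v [? ?]]. lia. exists v; split; auto; lia. Qed.

Lemma inv_sb n r lam w g a b : 1 <= n -> psum lam n = r -> Young n r lam w g ->
  1 <= a -> a < b <= r -> w b < w a -> sbb n lam (a,b) = true.
Proof. intros Hn Hr Y Ha Hb Hw. destruct Y as (H1 & H2 & H3 & H4 & H5).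
  destruct (blk_exists n r lam a ltac:(lia) Hr ltac:(lia)) as [i [Hi Bi]].
  destruct (blk_exists n r lam b ltac:(lia) Hr ltac:(lia)) as [j [Hj Bj]].
  apply sbb_iff. lia. destruct (Z.lt_total i j) as [E|[E|E]].
  - pose proof (blk_order lam i j (w a) (w b) ltac:(lia) E (H5 i a Hi Bi) (H5 j b Hj Bj)). lia.
  - subst. exists j. auto.
  - pose proof (blk_order lam j i b a ltac:(lia) E Bj Bi). lia.
Qed.

Lemma Phi_le_N n r lam w g : 1 <= n -> 1 <= r -> psum lam n = r -> Young n r lam w g ->
  Phi r w <= Z.of_nat (length (Nlist n r lam)).
Proof. intros Hn Hr1 Hr Y. rewrite (Phi_young n r lam w g Hr1 Y). unfold Nlist. rewrite <- sum_ind01.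
  apply sum_le. intros [a b] Hin. apply pairs_In in Hin; [|lia]. unfold invb; simpl.
  destruct (Z.ltb_spec (w b) (w a)).
  - rewrite (inv_sb n r lam w g a b) by (auto; lia). simpl. lia.
  - destruct (sbb n lam (a,b)); simpl; lia.
Qed.

Lemma sum01_zero {A} (P : list A) (h : A -> bool) :
  sumZ (map (fun p => if h p then 1 else 0) P) = 0 -> forall x, In x P -> h x = false.
Proof. rewrite sum_ind01. intros H x Hx. destruct (h x) eqn:E; auto.
  assert (In x (filter h P)) by (apply filter_In; auto). destruct (filter h P); simpl in *. contradiction. lia. Qed.

Lemma young_id_on n r lam w g : 1 <= r -> Young n r lam w g -> Phi r w = 0 -> forall j, w j = j.
Proof. intros Hr Y H0. pose proof Y as Y0. destruct Y as (H1 & H2 & H3 & H4 & H5).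
  rewrite (Phi_young n r lam w g Hr Y0) in H0.
  pose proof (sum01_zero _ _ H0) as Z0.
  assert (Inc : forall a b, 1 <= a -> a < b <= r -> w a < w b).
  { intros a b Ha Hb. specialize (Z0 (a,b) ltac:(apply pairs_In; lia)). unfold invb in Z0; simpl in Z0.
    apply Z.ltb_ge in Z0. assert (w a <> w b). { intro E. apply (f_equal g) in E. rewrite !H1 in E. lia. } lia. }
  assert (L1 : forall k : nat, 1 + Z.of_nat k <= r -> 1 + Z.of_nat k <= w (1 + Z.of_nat k)).
  { induction k; intros Hk. simpl. specialize (H4 1 ltac:(lia)). lia.
    replace (1 + Z.of_nat (S k)) with ((1 + Z.of_nat k) + 1) in * by lia.
    specialize (IHk ltac:(lia)). specialize (Inc (1 + Z.of_nat k) (1 + Z.of_nat k + 1) ltac:(lia) ltac:(lia)). lia. }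
  assert (L2 : forall k : nat, 1 <= r - Z.of_nat k -> w (r - Z.of_nat k) <= r - Z.of_nat k).
  { induction k; intros Hk. simpl. rewrite Z.sub_0_r. specialize (H4 r ltac:(lia)). lia.
    replace (r - Z.of_nat (S k)) with ((r - Z.of_nat k) - 1) in * by lia.
    specialize (IHk ltac:(lia)). specialize (Inc (r - Z.of_nat k - 1) (r - Z.of_nat k) ltac:(lia) ltac:(lia)). lia. }
  assert (E : forall y, 1 <= y <= r -> w y = y).
  { intros y Hy. specialize (L1 (Z.to_nat (y - 1))). specialize (L2 (Z.to_nat (r - y))).
    rewrite Z2Nat.id in L1, L2 by lia. replace (1 + (y - 1)) with y in L1 by lia.
    replace (r - (r - y)) with y in L2 by lia. specialize (L1 ltac:(lia)). specialize (L2 ltac:(lia)). lia. }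
  intros j. destruct (decomp r j ltac:(lia)) as [Ej B]. rewrite Ej. rewrite per_gen by auto. rewrite E; auto.
Qed.

Lemma young_word n r lam : 1 <= n -> 1 <= r -> psum lam n = r ->
  forall (m : nat) w g, Young n r lam w g -> Phi r w = Z.of_nat m ->
  exists l, Forall (fun i => 1 <= i <= r) l /\ length l = m /\ forall j, w j = word_eval r l j.
Proof. intros Hn Hr1 Hr. induction m; intros w g Y HP.
  - exists []. split; auto. split; auto. intros j. simpl. apply (young_id_on n r lam w g); auto.
  - pose proof Y as Y0. destruct Y as (H1 & H2 & H3 & H4 & H5).
    rewrite (Phi_young n r lam w g Hr1 Y0) in HP.
    destruct (sum01_pos (pairs r) (invb w)) as [[a b] [Hin Hab]]. lia.
    apply pairs_In in Hin; [|lia]. unfold invb in Hab; simpl in Hab. apply Z.ltb_lt in Hab.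
    pose proof (inv_sb n r lam w g a b Hn Hr Y0 ltac:(lia) ltac:(lia) Hab) as Hs.
    apply sbb_iff in Hs; [|lia]. destruct Hs as [i [Hi [Ba Bb]]].
    pose proof (H5 i a Hi Ba) as Bwa. pose proof (H5 i b Hi Bb) as Bwb.
    destruct (disc_gt g (Z.to_nat (w a - w b)) (w b)) as [v [Hv Hgv]].
    { rewrite Z2Nat.id by lia. replace (w b + (w a - w b)) with (w a) by lia. rewrite !H1. lia. }
    rewrite Z2Nat.id in Hv by lia.
    pose proof (blk_range n r lam i (w a) Hr Hi Bwa). pose proof (blk_range n r lam i (w b) Hr Hi Bwb).
    assert (Bv : blk lam i v) by (unfold blk in *; lia).
    assert (Bv1 : blk lam i (v+1)) by (unfold blk in *; lia).
    destruct (young_step n r lam w g v i Hn Hr Y0 ltac:(lia) Hi Bv Bv1) as [Y' HP'].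
    destruct (Z.ltb_spec (g v) (g (v+1))); [lia|].
    rewrite (Phi_young n r lam w g Hr1 Y0) in HP'.
    destruct (IHm _ _ Y' ltac:(lia)) as [l [Fl [Ll El]]].
    exists (v :: l). split. constructor; auto; lia. split. simpl; auto.
    intros j. simpl. rewrite <- El. rewrite s_gen_inv by lia. auto.
Qed.

Lemma young_max n r lam : 1 <= n -> 1 <= r -> psum lam n = r ->
  forall (m : nat) w g, Young n r lam w g -> Z.of_nat (length (Nlist n r lam)) - Phi r w = Z.of_nat m ->
  exists w' g', Young n r lam w' g' /\ Phi r w' = Z.of_nat (length (Nlist n r lam)).
Proof. intros Hn Hr1 Hr. induction m; intros w g Y HP.
  - exists w, g. split; auto. lia.
  - pose proof Y as Y0. destruct Y as (H1 & H2 & H3 & H4 & H5).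
    destruct (existsb (fun x => andb (sbb n lam x) (negb (invb w x))) (pairs r)) eqn:EX.
    + apply existsb_exists in EX. destruct EX as [[a b] [Hin Hx]].
      apply Bool.andb_true_iff in Hx. destruct Hx as [Hs Hi'].
      apply Bool.negb_true_iff in Hi'. unfold invb in Hi'; simpl in Hi'. apply Z.ltb_ge in Hi'.
      apply pairs_In in Hin; [|lia].
      apply sbb_iff in Hs; [|lia]. destruct Hs as [i [Hi [Ba Bb]]].
      assert (w a <> w b). { intro E. apply (f_equal g) in E. rewrite !H1 in E. lia. }
      pose proof (H5 i a Hi Ba) as Bwa. pose proof (H5 i b Hi Bb) as Bwb.
      destruct (disc_lt g (Z.to_nat (w b - w a)) (w a)) as [v [Hv Hgv]].
      { rewrite Z2Nat.id by lia. replace (w a + (w b - w a)) with (w b) by lia. rewrite !H1. lia. }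
      rewrite Z2Nat.id in Hv by lia.
      pose proof (blk_range n r lam i (w a) Hr Hi Bwa). pose proof (blk_range n r lam i (w b) Hr Hi Bwb).
      assert (Bv : blk lam i v) by (unfold blk in *; lia).
      assert (Bv1 : blk lam i (v+1)) by (unfold blk in *; lia).
      destruct (young_step n r lam w g v i Hn Hr Y0 ltac:(lia) Hi Bv Bv1) as [Y' HP'].
      destruct (Z.ltb_spec (g v) (g (v+1))); [|lia].
      apply (IHm _ _ Y'). lia.
    + exfalso. assert (Phi r w = Z.of_nat (length (Nlist n r lam))); [|lia].
      rewrite (Phi_young n r lam w g Hr1 Y0). unfold Nlist. rewrite <- sum_ind01.
      apply sum_ext. intros [a b] Hin.
      assert (Hf := proj2 (Bool.not_true_iff_false _) EX).
      destruct (invb w (a,b)) eqn:Ei.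
      * unfold invb in Ei; simpl in Ei. apply Z.ltb_lt in Ei. apply pairs_In in Hin; [|lia].
        rewrite (inv_sb n r lam w g a b); auto; lia.
      * destruct (sbb n lam (a,b)) eqn:Es; auto. exfalso. apply Hf. apply existsb_exists.
        exists (a,b). split; auto. rewrite Es, Ei. reflexivity.
Qed.

Lemma young_idf n r lam : 1 <= r -> Young n r lam (fun x => x) (fun x => x).
Proof. intros Hr. unfold Young. repeat split; auto; try lia; unfold blk in *; lia. Qed.

Lemma Phi_idf r : 1 <= r -> Phi r (fun x => x) = 0.
Proof. intros Hr. unfold Phi. rewrite <- (sum_zero (pairs r)). apply sum_ext.
  intros [a b] Hin. apply pairs_In in Hin; [|lia]. unfold term; simpl. rewrite Z.div_small by lia. auto. Qed.
Lemma young_of_in n r lam w : 1 <= n -> in_young n r lam w -> exists g, Young n r lam w g.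
Proof. intros Hn [[[g [G1 G2]] Hp] [Hr Hb]]. exists g. split; [|split; [|split; [|split]]]; auto.
  intros i x Hi Bx. apply (inR_small n r lam i); auto. apply Hb; auto. apply inR_small; auto. Qed.

Lemma in_of_young n r lam w g : Young n r lam w g -> in_young n r lam w.
Proof. intros (H1 & H2 & H3 & H4 & H5). split. split; auto. exists g; auto. split; auto.
  intros i x Hi Bx. apply inR_small; auto. apply H5; auto. apply (inR_small n r lam i); auto. Qed.

Lemma aff_young n r lam w g : 1 <= n -> 1 <= r -> psum lam n = r -> Young n r lam w g ->
  aff_length r w (Z.to_nat (Phi r w)).
Proof. intros Hn Hr1 Hr Y. pose proof (Phi_nonneg r w).
  destruct (young_word n r lam Hn Hr1 Hr (Z.to_nat (Phi r w)) w g Y ltac:(lia)) as [l [F [L E]]].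
  split. exists 0, l. split; auto. split; auto. intros j; rewrite E; lia.
  intros k' Hk. apply Phi_expr in Hk; auto. lia. Qed.

Lemma aff_unique r w a b : aff_length r w a -> aff_length r w b -> a = b.
Proof. intros [H1 H2] [H3 H4]. specialize (H2 b H3). specialize (H4 a H1). lia. Qed.

Lemma card_Z n r lam : 1 <= n -> 1 <= r -> psum lam n = r ->
  has_card (Zset n r lam) (length (Nlist n r lam)).
Proof. intros Hn Hr1 Hr. exists (Nlist n r lam). split. apply NoDup_filter, pairs_NoDup. split; auto.
  intros [s t]. unfold Nlist, Zset. rewrite filter_In, pairs_In, sbb_iff by lia. split.
  - intros [H1 [m [Hm [B1 B2]]]]. split. lia. split. lia. exists m. split; auto.
    split; apply inR_small; auto.
  - intros [H1 [H2 [m [Hm [B1 B2]]]]]. apply inR_small in B1; auto. apply inR_small in B2; auto.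
    pose proof (blk_range n r lam m t Hr Hm B2). split. lia. exists m; auto.
Qed.

Lemma card_Y n r lam d : 1 <= n -> 1 <= r -> psum lam n = r -> is_affine_perm r d ->
  has_card (Yset n r lam d) (length (Nlist n r lam)).
Proof. intros Hn Hr1 Hr [[gd [G1 G2]] Dp].
  assert (Gp : forall i, gd (i + r) = gd i + r).
  { intros i. rewrite <- (G2 i) at 1. rewrite <- Dp, G1. auto. }
  set (c := fun x => - r * ((gd x - 1) / r)).
  exists (map (fun p => (fst p + c (fst p), snd p + c (fst p))) (Nlist n r lam)).
  split; [|split].
  - apply NoDup_map_NoDup_ForallPairs. 2: apply NoDup_filter, pairs_NoDup.
    intros [a b] [a' b'] Ha Ha' E. unfold Nlist in *. apply filter_In in Ha. apply filter_In in Ha'.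
    destruct Ha as [Ha _]. destruct Ha' as [Ha' _]. apply pairs_In in Ha; [|lia]. apply pairs_In in Ha'; [|lia].
    simpl in E. inversion E as [[E1 E2]]. unfold c in *.
    set (Q := (gd a - 1) / r) in *. set (Q' := (gd a' - 1) / r) in *.
    assert (Q = Q'). { destruct (Z.lt_total Q Q') as [H|[H|H]]; auto; nia. }
    rewrite H in *. f_equal; lia.
  - apply length_map.
  - intros [s t]. rewrite in_map_iff. simpl. split.
    + intros [[a b] [E Hin]]. simpl in E. inversion E; subst s t. clear E.
      unfold Nlist in Hin. apply filter_In in Hin. destruct Hin as [Hin Hs].
      apply pairs_In in Hin; [|lia]. apply sbb_iff in Hs; [|lia]. destruct Hs as [i [Hi [Ba Bb]]].
      destruct (decomp r (gd a) ltac:(lia)) as [Ej Bj].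
      split; [|split].
      * exists ((gd a - 1) mod r + 1). split; auto.
        assert (d (gd a) = a) by apply G2. rewrite Ej in H.
        rewrite per_gen in H by auto. unfold c. lia.
      * lia.
      * exists (i + (- ((gd a - 1) / r)) * n). split; apply inR_iff; exists (- ((gd a - 1) / r)), i;
        split; auto; split; auto; unfold c.
        replace (a + - r * ((gd a - 1) / r) - - ((gd a - 1) / r) * r) with a by lia. auto.
        replace (b + - r * ((gd a - 1) / r) - - ((gd a - 1) / r) * r) with b by lia. auto.
    + intros [[j [Hj Ej]] [Hst [m [Ms Mt]]]].
      apply inR_iff in Ms. apply inR_iff in Mt.
      destruct Ms as [k [i [Hi [Hm Bs]]]]. destruct Mt as [k' [i' [Hi' [Hm' Bt]]]].
      destruct (decomp_uniq n i i' k k' Hi Hi' ltac:(lia)) as [-> ->].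
      exists (s - k' * r, t - k' * r).
      assert (Hc : c (s - k' * r) = k' * r).
      { unfold c. replace (s - k' * r) with (s + (- k') * r) by lia. rewrite per_gen by auto.
        rewrite <- Ej, G1. replace (j + - k' * r - 1) with ((j - 1) + (- k') * r) by lia.
        rewrite Z.div_add by lia. rewrite Z.div_small by lia. lia. }
      simpl. rewrite Hc. split. f_equal; lia.
      unfold Nlist. apply filter_In. split.
      * pose proof (blk_range n r lam i' _ Hr Hi' Bs). pose proof (blk_range n r lam i' _ Hr Hi' Bt).
        apply pairs_In; lia.
      * apply sbb_iff. lia. exists i'. auto.
Qed.

Theorem lemma3p10p1 (n r : Z) (lam : Z -> nat) (d : Z -> Z) :
  1 <= n -> 1 <= r -> in_Lambda n r lam -> in_D n r lam d ->
  (exists w0 k, is_longest n r lam w0 /\ aff_length r w0 k) /\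
  (forall w0 k, is_longest n r lam w0 -> aff_length r w0 k ->
     has_card (Yset n r lam d) k /\ has_card (Zset n r lam) k).
Proof. intros Hn Hr1 [_ Hr] [Hd _].
  set (N := length (Nlist n r lam)).
  destruct (young_max n r lam Hn Hr1 Hr (Z.to_nat (Z.of_nat N)) (fun x => x) (fun x => x)
              (young_idf n r lam Hr1)) as [ws [gs [Ys Ps]]].
  { rewrite Phi_idf by auto. fold N. lia. }
  fold N in Ps.
  assert (As : aff_length r ws N).
  { pose proof (aff_young n r lam ws gs Hn Hr1 Hr Ys). rewrite Ps, Nat2Z.id in H. auto. }
  assert (Long : is_longest n r lam ws).
  { split. eapply in_of_young; eauto.
    intros w a b Iw Aw Ab. destruct (young_of_in n r lam w Hn Iw) as [g Y].
    pose proof (aff_young n r lam w g Hn Hr1 Hr Y) as A2.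
    pose proof (Phi_le_N n r lam w g Hn Hr1 Hr Y). fold N in H.
    rewrite (aff_unique r w a _ Aw A2), (aff_unique r ws b _ Ab As). lia. }
  split. exists ws, N. auto.
  intros w0 k [I0 L0] A0.
  destruct (young_of_in n r lam w0 Hn I0) as [g0 Y0].
  pose proof (aff_young n r lam w0 g0 Hn Hr1 Hr Y0) as A2.
  pose proof (Phi_le_N n r lam w0 g0 Hn Hr1 Hr Y0). fold N in H.
  pose proof (L0 ws N k (in_of_young n r lam ws gs Ys) As A0).
  rewrite (aff_unique r w0 k _ A0 A2) in *.
  assert (Z.to_nat (Phi r w0) = N) by lia. rewrite H1.
  split. apply card_Y; auto. apply card_Z; auto.
Qed.
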